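(* If $\mathbb P(T(X)\ge 1-\alpha)>0$, then $\mathbb E[D^\mu(X)]>0$ for every $\mu\ge 0$.
   Context: Let $(X,Y)\sim P_{XY}$ on $\mathcal X\times\mathcal Y$, $\alpha\in(0,1)$, $\mathcal I$ a finite collection of subsets of $\mathcal Y$, $w:\mathcal I\to(0,B)$ a bounded positive weight. For $C\in\mathcal I$ let $p_C(x)=\mathbb P(Y\in C\mid X=x)$, $\ell_{x,C}(\mu)=w(C)p_C(x)+\mu(p_C(x)-(1-\alpha))$ for $\mu\ge0$, $\mathcal U_x(\mu)=\max_{C\in\mathcal I}\ell_{x,C}(\mu)$, $D^\mu(x)=\mathbb 1\{\mathcal U_x(\mu)\ge0\}$, and $T(x)=\max_{C\in\mathcal I}p_C(x)$. *)

(* Defs.v *)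
From HB Require Import structures.
From mathcomp Require Import all_boot all_order all_algebra.
From mathcomp Require Import all_classical all_reals all_analysis.
Set Implicit Arguments. Unset Strict Implicit. Unset Printing Implicit Defensive.
Import Order.TTheory GRing.Theory Num.Theory.
Local Open Scope classical_set_scope.
Local Open Scope ring_scope.

Definition is_cond_distr d dX dY (Omega : measurableType d)
  (Xs : measurableType dX) (Ys : measurableType dY) (R : realType)
  (P : probability Omega R) (X : Omega -> Xs) (Y : Omega -> Ys)
  (k : R.-pker Xs ~> Ys) : Prop :=
  forall (A : set Xs) (B : set Ys), measurable A -> measurable B ->
    P (X @^-1` A `&` Y @^-1` B) = (\int[P]_(w in X @^-1` A) k (X w) B)%E.

(* p_C(x) = P(Y \in C | X = x) *)
Definition pC dX dY (Xs : measurableType dX) (Ys : measurableType dY)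
  (R : realType) (k : R.-pker Xs ~> Ys) (C : set Ys) (x : Xs) : R :=
  fine (k x C).

Definition ell dX dY (Xs : measurableType dX) (Ys : measurableType dY)
  (R : realType) (k : R.-pker Xs ~> Ys) (alpha : R) (wC : R) (C : set Ys)
  (x : Xs) (mu : R) : R :=
  wC * pC k C x + mu * (pC k C x - (1 - alpha)).

Definition Ux dX dY (Xs : measurableType dX) (Ys : measurableType dY)
  (R : realType) (k : R.-pker Xs ~> Ys) (alpha : R) (I : finType) (i0 : I)
  (Cs : I -> set Ys) (w : I -> R) (x : Xs) (mu : R) : R :=
  \big[Num.max/ell k alpha (w i0) (Cs i0) x mu]_(i : I)
     ell k alpha (w i) (Cs i) x mu.

Definition Dmu dX dY (Xs : measurableType dX) (Ys : measurableType dY)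
  (R : realType) (k : R.-pker Xs ~> Ys) (alpha : R) (I : finType) (i0 : I)
  (Cs : I -> set Ys) (w : I -> R) (mu : R) (x : Xs) : R :=
  if 0 <= Ux k alpha i0 Cs w x mu then 1 else 0.

Definition Tx dX dY (Xs : measurableType dX) (Ys : measurableType dY)
  (R : realType) (k : R.-pker Xs ~> Ys) (I : finType) (i0 : I)
  (Cs : I -> set Ys) (x : Xs) : R :=
  \big[Num.max/pC k (Cs i0) x]_(i : I) pC k (Cs i) x.

(* Main.v *)
Require Import Defs.
From HB Require Import structures.
From mathcomp Require Import all_boot all_order all_algebra.
From mathcomp Require Import all_classical all_reals all_analysis.
From mathcomp Require Import measurable_realfun.
Import Order.TTheory GRing.Theory Num.Theory.
Local Open Scope classical_set_scope.
Local Open Scope ring_scope.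

Lemma mbigmax d (T : measurableType d) (R : realType) (I : Type) (s : seq I)
  (F : I -> T -> R) (x0 : T -> R) :
  measurable_fun setT x0 -> (forall i, measurable_fun setT (F i)) ->
  measurable_fun setT (fun x => \big[Num.max/x0 x]_(i <- s) F i x).
Proof.
move=> m0 mF; elim: s => [|a s IH].
  by under eq_fun do rewrite big_nil.
under eq_fun do rewrite big_cons.
exact: measurable_maxr.
Qed.

Lemma mpC dX dY (Xs : measurableType dX) (Ys : measurableType dY)
  (R : realType) (k : R.-pker Xs ~> Ys) (C : set Ys) : measurable C ->
  measurable_fun setT (pC k C).
Proof.
move=> mC; rewrite /pC.
apply: (measurableT_comp (f := fine)); first exact: fine_measurable.
exact: measurable_kernel.
Qed.

Theorem proposition5 (d dX dY : measure_display) (Omega : measurableType d)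
  (Xs : measurableType dX) (Ys : measurableType dY) (R : realType)
  (P : probability Omega R) (X : Omega -> Xs) (Y : Omega -> Ys)
  (mX : measurable_fun setT X) (mY : measurable_fun setT Y)
  (k : R.-pker Xs ~> Ys) (hk : is_cond_distr P X Y k)
  (alpha : R) (halpha : 0 < alpha < 1)
  (I : finType) (i0 : I) (Cs : I -> set Ys) (mCs : forall i, measurable (Cs i))
  (B : R) (w : I -> R) (hw : forall i, 0 < w i < B) :
  (0 < P [set om | (1 - alpha <= Tx k i0 Cs (X om))%R])%E ->
  forall mu : R, 0 <= mu ->
    (0 < \int[P]_om (Dmu k alpha i0 Cs w mu (X om))%:E)%E.
Proof.
move=> hP mu mu0.
have mT : measurable_fun setT (Tx k i0 Cs).
  by apply: mbigmax => [|i]; apply: mpC.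
have mell i : measurable_fun setT (fun x => ell k alpha (w i) (Cs i) x mu).
  rewrite /ell; apply: measurable_funD.
    by apply: measurable_funM => //; apply: mpC.
  apply: measurable_funM => //; apply: measurable_funB => //; exact: mpC.
have mU : measurable_fun setT (fun x => Ux k alpha i0 Cs w x mu).
  exact: mbigmax.
have mD : measurable_fun setT (Dmu k alpha i0 Cs w mu).
  rewrite /Dmu; apply: measurable_fun_ifT => //.
  exact: measurable_fun_ler.
set S := [set om | (1 - alpha <= Tx k i0 Cs (X om))%R].
have mS : measurable S.
  have -> : S = (Tx k i0 Cs \o X) @^-1` `[1 - alpha, +oo[.
    by apply/seteqP; split => om /=; rewrite in_itv /= andbT.
  rewrite -[_ @^-1` _]setTI; apply: (measurableT_comp mT mX) => //.
apply: (lt_le_trans hP).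
have -> : P S = (\int[P]_(x in setT) (\1_S x)%:E)%E by rewrite integral_indic // setIT.
apply: ge0_le_integral => //.
- by apply/measurable_EFinP; apply: measurable_indic.
- by apply/measurable_EFinP; apply: measurableT_comp.
move=> om _; rewrite lee_fin /indic.
case: (boolP (om \in S)) => [|_]; last first.
  by rewrite /Dmu; case: ifP.
rewrite inE /S /= => hS.
have [i hi] : exists i, 1 - alpha <= pC k (Cs i) (X om).
  apply/not_existsP => hn.
  have : Tx k i0 Cs (X om) < 1 - alpha.
    apply/bigmax_ltP; split => [|i _]; rewrite ltNge; apply/negP => h.
      exact: (hn i0). exact: (hn i).
  by rewrite ltNge hS.
have p0 : 0 <= pC k (Cs i) (X om).
  by rewrite /pC; apply: fine_ge0; apply: measure_ge0.
rewrite /Dmu; case: ifPn => // /negP []; apply: le_trans (le_bigmax _ _ i).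
rewrite /ell; apply: addr_ge0.
  by apply: mulr_ge0 => //; case/andP: (hw i) => /ltW.
by apply: mulr_ge0 => //; rewrite subr_ge0.
Qed.
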